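(* Let $n=2k$, let $r$ be an integer with $1<r<k$ and $\gcd(r,k)=1$, and let $\{u_1,\ldots,u_k\}$ be a basis of $\mathbb{F}_{2^k}$ over $\mathbb{F}_2$. Let $t$ be a positive integer, $F_1,\ldots,F_t$ reduced polynomials in $\mathbb{F}_2[X_1,\ldots,X_k]$, and $f_i(x)=F_i(\mathrm{Tr}^n_1(u_1x),\ldots,\mathrm{Tr}^n_1(u_kx))$. Then $\widehat H(x)=(\sum_{i=1}^{2^r-1}x^{(i2^{k-r}+1)(2^k-1)+1},f_1(x),\ldots,f_t(x))$ is a vectorial plateaued $(n,k+t)$-function if and only if the $(n,t)$-function $(f_1,\ldots,f_t)$ is vectorial plateaued. In particular, if $k>2$ and each $f_i$ is quadratic, then $\widehat H$ is a non-quadratic vectorial plateaued function.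
   Context: $\mathrm{Tr}^m_1(x)=\sum_{i=0}^{m-1}x^{2^i}$. The first coordinate $G(x)=\sum_{i=1}^{2^r-1}x^{(i2^{k-r}+1)(2^k-1)+1}$ takes values in $\mathbb{F}_{2^k}$, so $\widehat H:\mathbb{F}_{2^n}\to\mathbb{F}_{2^k}\times\mathbb{F}_2^t$ with components $\mathrm{Tr}^k_1(\lambda G(x))+\sum_iv_if_i(x)$, $(\lambda,v)\ne(0,0)$. A Boolean function $f$ is plateaued if $W_f(a)=\sum_x(-1)^{f(x)+\mathrm{Tr}^n_1(ax)}$ takes values in $\{0,\pm2^s\}$ for some $n/2\le s\le n$; a vectorial function is vectorial plateaued if all components are plateaued. Quadratic means algebraic degree at most 2. A reduced polynomial is a multilinear polynomial over $\mathbb{F}_2$. *)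

(* Defs.v *)
From HB Require Import structures.
From mathcomp Require Import all_boot all_order all_algebra.
Set Implicit Arguments. Unset Strict Implicit. Unset Printing Implicit Defensive.
Import GRing.Theory Num.Theory.
Local Open Scope ring_scope.

Section Defs.
Variable L : finFieldType.

Definition trL (m : nat) (x : L) : L := \sum_(i < m) x ^+ (2 ^ i).
(* its value as an element of F_2 = bool (it lies in {0,1}) *)
Definition trb (m : nat) (x : L) : bool := trL m x == 1.

Definition in_sub (k : nat) (x : L) : bool := x ^+ (2 ^ k) == x.

Definition is_F2_basis (k : nat) (u : 'I_k -> L) : Prop :=
  [/\ forall j, in_sub k (u j),
      forall c : 'I_k -> bool, \sum_(j | c j) u j = 0 -> forall j, ~~ c j
    & forall y, in_sub k y -> exists c : 'I_k -> bool, y = \sum_(j | c j) u j].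

Definition walsh (n : nat) (f : L -> bool) (a : L) : int :=
  \sum_(x : L) (-1) ^+ (f x (+) trb n (a * x)).

Definition plateaued (n : nat) (f : L -> bool) : Prop :=
  exists s : nat, [/\ (n <= 2 * s)%N, (s <= n)%N &
    forall a, (walsh n f a == 0) || (absz (walsh n f a) == 2 ^ s)%N].

Definition wt2 (n j : nat) : nat := \sum_(i < n) odd (j %/ 2 ^ i).

(* algebraic degree at most d: the (unique) univariate representation
   f(x) = sum_{j < 2^n} a_j x^j only involves exponents of 2-weight <= d *)
Definition deg_le (n d : nat) (f : L -> bool) : Prop :=
  exists a : 'I_(2 ^ n) -> L,
    forall x, (f x)%:R = \sum_(j < 2 ^ n | (wt2 n j <= d)%N) a j * x ^+ j.

Definition Gfun (k r : nat) (x : L) : L :=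
  \sum_(1 <= i < 2 ^ r) x ^+ ((i * 2 ^ (k - r) + 1) * (2 ^ k - 1) + 1).

End Defs.

(* reduced (multilinear) polynomials in F_2[X_1..X_k]: set of monomials,
   a monomial being the set of variables it contains *)
Definition reduced_poly (k : nat) := {set {set 'I_k}}.
Definition rp_eval k (P : reduced_poly k) (b : 'I_k -> bool) : bool :=
  \big[addb/false]_(S in P) [forall j in S, b j].

Definition ffun_of (L : finFieldType) (n k : nat) (u : 'I_k -> L)
  (P : reduced_poly k) (x : L) : bool :=
  rp_eval P (fun j => trb n (u j * x)).

Definition fcomp (L : finFieldType) t (f : 'I_t -> L -> bool)
  (v : 'I_t -> bool) (x : L) : bool :=
  \big[addb/false]_(i < t) (v i && f i x).

Definition Hcomp (L : finFieldType) k r t (f : 'I_t -> L -> bool)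
  (lam : L) (v : 'I_t -> bool) (x : L) : bool :=
  trb k (lam * Gfun k r x) (+) fcomp f v x.

Definition f_vplateaued (L : finFieldType) n t (f : 'I_t -> L -> bool) : Prop :=
  forall v : 'I_t -> bool, (exists i, v i) -> plateaued n (fcomp f v).

Definition H_vplateaued (L : finFieldType) n k r t (f : 'I_t -> L -> bool) : Prop :=
  forall (lam : L) (v : 'I_t -> bool), in_sub k lam ->
    (lam != 0 \/ exists i, v i) -> plateaued n (Hcomp k r f lam v).

Definition H_quadratic (L : finFieldType) n k r t (f : 'I_t -> L -> bool) : Prop :=
  forall (lam : L) (v : 'I_t -> bool), in_sub k lam ->
    (lam != 0 \/ exists i, v i) -> deg_le n 2 (Hcomp k r f lam v).

(* Main.v *)
Require Import Defs.
From mathcomp Require Import all_boot all_order all_algebra all_fingroup finfield zify ring.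
Import GRing.Theory Num.Theory.
Local Open Scope ring_scope.
Set Implicit Arguments. Unset Strict Implicit.

Lemma binstep j d : (0 < d)%N -> (j %% (2 * d) = j %% d + odd (j %/ d) * d)%N.
Proof.
move=> d0; rewrite {1}(divn_eq (j %% (2 * d)) d) -modn_divl modn2.
by rewrite (modn_dvdm _ (dvdn_mull 2 (dvdnn d))) addnC.
Qed.

Lemma binexp n j : (j %% 2 ^ n = \sum_(i < n) odd (j %/ 2 ^ i) * 2 ^ i)%N.
Proof.
elim: n => [|n IH]; first by rewrite expn0 modn1 big_ord0.
by rewrite big_ord_recr /= -IH expnS binstep // expn_gt0.
Qed.

Lemma wt_cases n j : (j < 2 ^ n)%N -> (wt2 n j <= 2)%N ->
  j = 0%N \/ (exists i, j = 2 ^ i)%N \/ (exists i l, j = 2 ^ i + 2 ^ l)%N.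
Proof.
move=> jn hw.
pose S := [set i : 'I_n | odd (j %/ 2 ^ i)].
have jE : j = (\sum_(i in S) 2 ^ i)%N.
  rewrite -{1}(modn_small jn) binexp [RHS]big_mkcond /=; apply: eq_bigr => i _.
  by rewrite inE; case: (odd _); rewrite ?mul1n ?mul0n.
have cS : #|S| = wt2 n j.
  rewrite /wt2 -sum1_card [LHS]big_mkcond /=; apply: eq_bigr => i _.
  by rewrite inE; case: (odd _).
move: hw; rewrite -cS leq_eqVlt ltnS leq_eqVlt ltnS leqn0 => /or3P[hc|hc|hc].
- move/cards2P: hc => [i [l [il eS]]]; right; right; exists i, l.
  by rewrite jE eS big_setU1 ?big_set1 //= inE.
- move/cards1P: hc => [i eS]; right; left; exists i; by rewrite jE eS big_set1.
- by left; rewrite jE; move/eqP/cards0_eq: hc => ->; rewrite big_set0.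
Qed.

Section Basics.
Variable L : finFieldType.
Variable k : nat.
Hypothesis hL : #|L| = (2 ^ (2 * k))%N.

Lemma char2 : 2%N \in [pchar L].
Proof. exact: (card_finPcharP hL). Qed.

Lemma addxx (x : L) : x + x = 0. Proof. exact: (addrr_pchar2 char2 x). Qed.
Lemma oppE (x : L) : - x = x.
Proof. exact: (oppr_pchar2 char2 x). Qed.
Lemma add_eq0 (x y : L) : (x + y == 0) = (x == y).
Proof. by rewrite addr_eq0 oppE. Qed.

Lemma frob2 m (x y : L) : (x + y) ^+ (2 ^ m) = x ^+ (2 ^ m) + y ^+ (2 ^ m).
Proof.
elim: m => [|m IH]; first by rewrite !expr1.
by rewrite expnSr !exprM IH sqrrD (mulrn_pchar char2) addr0.
Qed.

Lemma frob_sum m I (s : seq I) (P : pred I) (G : I -> L) :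
  (\sum_(i <- s | P i) G i) ^+ (2 ^ m) = \sum_(i <- s | P i) (G i) ^+ (2 ^ m).
Proof.
apply: (big_morph (fun x => x ^+ (2 ^ m))); first by move=> x y; apply: frob2.
by rewrite expr0n expn_eq0.
Qed.

Lemma xq2 (x : L) : x ^+ (2 ^ (2 * k)) = x.
Proof. by rewrite -hL expf_card. Qed.

Definition bar (x : L) := x ^+ (2 ^ k).
Lemma barK x : bar (bar x) = x.
Proof. by rewrite /bar -exprM -expnD addnn -mul2n xq2. Qed.
Lemma barD x y : bar (x + y) = bar x + bar y. Proof. exact: frob2. Qed.
Lemma barM x y : bar (x * y) = bar x * bar y. Proof. exact: exprMn. Qed.


Lemma trLD m (x y : L) : trL m (x + y) = trL m x + trL m y.
Proof. by rewrite /trL -big_split; apply: eq_bigr => i _; rewrite frob2. Qed.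

Lemma trL0 m : trL m (0 : L) = 0.
Proof. by rewrite /trL big1 // => i _; rewrite expr0n expn_eq0. Qed.

Lemma trLX m j (x : L) : trL m (x ^+ (2 ^ j)) = (trL m x) ^+ (2 ^ j).
Proof. by rewrite /trL frob_sum; apply: eq_bigr => i _; rewrite -!exprM mulnC. Qed.

Lemma trL_sq m (x : L) : x ^+ (2 ^ m) = x -> (trL m x) ^+ 2 = trL m x.
Proof.
case: m => [|m] hx; first by rewrite /trL big_ord0 expr0n.
have h2 := trLX m.+1 1 x; rewrite expn1 in h2; rewrite -h2 /trL.
have E : forall i, (x ^+ 2) ^+ (2 ^ i) = x ^+ (2 ^ i.+1).
  by move=> i; rewrite -exprM expnS.
transitivity (\sum_(i < m) x ^+ (2 ^ i.+1) + x).
  by rewrite big_ord_recr /= E hx; congr (_ + _); apply: eq_bigr => i _; exact: E.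
by rewrite big_ord_recl /= expr1 addrC.
Qed.

Lemma sq01 (t : L) : t ^+ 2 = t -> t = 0 \/ t = 1.
Proof.
move=> h; have : t * (t - 1) = 0 by rewrite mulrBr mulr1 -expr2 h subrr.
by move/eqP; rewrite mulf_eq0 subr_eq0 => /orP[]/eqP; auto.
Qed.

Lemma trbD m (x y : L) : x ^+ (2 ^ m) = x -> y ^+ (2 ^ m) = y ->
  trb m (x + y) = trb m x (+) trb m y.
Proof.
move=> hx hy; rewrite /trb trLD.
have n10 : ((0:L) == 1) = false by rewrite eq_sym oner_eq0.
case: (sq01 (trL_sq hx)) => ->; case: (sq01 (trL_sq hy)) => ->;
  by rewrite ?addr0 ?add0r ?addxx ?eqxx ?n10.
Qed.

Lemma trb0 m : trb m (0 : L) = false.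
Proof. by rewrite /trb trL0 eq_sym oner_eq0. Qed.

Lemma trLn (w : L) : trL (2 * k) w = trL k (w + bar w).
Proof.
rewrite trLD /trL mul2n -addnn big_split_ord /=; congr (_ + _).
by apply: eq_bigr => i _; rewrite /bar -exprM -expnD.
Qed.

Lemma trbn (w : L) : trb (2 * k) w = trb k (w + bar w).
Proof. by rewrite /trb trLn. Qed.

Lemma trbnD (x y : L) : trb (2 * k) (x + y) = trb (2 * k) x (+) trb (2 * k) y.
Proof. by apply: trbD; apply: xq2. Qed.

Definition inK (x : L) := x ^+ (2 ^ k) = x.
Lemma inKP x : reflect (inK x) (in_sub k x).
Proof. exact: eqP. Qed.
Lemma inK_bar x : inK x -> bar x = x. Proof. by []. Qed.
Lemma inKD x y : inK x -> inK y -> inK (x + y).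
Proof. by rewrite /inK frob2 => -> ->. Qed.
Lemma inKM x y : inK x -> inK y -> inK (x * y).
Proof. by rewrite /inK exprMn => -> ->. Qed.
Lemma inKV x : inK x -> inK (x^-1).
Proof. by rewrite /inK exprVn => ->. Qed.
Lemma inKX x j : inK x -> inK (x ^+ j).
Proof. by rewrite /inK -exprM mulnC exprM => ->. Qed.
Lemma inK0 : inK 0. Proof. by rewrite /inK expr0n expn_eq0. Qed.
Lemma inK1 : inK 1. Proof. by rewrite /inK expr1n. Qed.

Definition T (x : L) := x + bar x.
Lemma inKT x : inK (T x).
Proof. by rewrite /inK -/(bar _) /T barD barK addrC. Qed.
Lemma TD x y : T (x + y) = T x + T y.
Proof. by rewrite /T barD addrACA. Qed.
Lemma T_eq0 x : (T x == 0) = (x ^+ (2 ^ k) == x).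
Proof. by rewrite /T add_eq0 eq_sym. Qed.
Lemma TK x e : inK e -> T (x + e) = T x.
Proof. by move=> he; rewrite TD; move: (he); rewrite /inK => he'; rewrite /T /bar he' addxx addr0. Qed.


Definition Kset := [set x : L | in_sub k x].
Lemma inKset x : (x \in Kset) = in_sub k x. Proof. by rewrite inE. Qed.
Lemma inKsetP x : reflect (inK x) (x \in Kset). Proof. by rewrite inE; exact: eqP. Qed.

Lemma natbD (a b : bool) : ((a (+) b)%:R : L) = a%:R + b%:R.
Proof. by case: a; case: b; rewrite /= ?addr0 ?add0r ?addxx. Qed.

Lemma sumb I (r : seq I) (P : pred I) (G : I -> L) :
  \sum_(j <- r | P j) G j = \sum_(j <- r) (P j)%:R * G j.
Proof. by rewrite big_mkcond; apply: eq_bigr => j _; case: (P j); rewrite ?mul1r ?mul0r. Qed.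

Lemma card_K (u : 'I_k -> L) : is_F2_basis u -> #|Kset| = (2 ^ k)%N.
Proof.
case=> uK uind uspan.
pose phi (c : {ffun 'I_k -> bool}) := \sum_(j | c j) u j.
have inj : injective phi.
  move=> c c' e; apply/ffunP => j.
  have h : \sum_(j | c j (+) c' j) u j = 0.
    rewrite sumb; transitivity (phi c + phi c'); last by rewrite e addxx.
    rewrite /phi sumb [X in _ + X]sumb -big_split; apply: eq_bigr => i _; by rewrite natbD mulrDl.
  by move: (uind _ h j); case: (c j); case: (c' j).
have -> : Kset = phi @: [set: {ffun 'I_k -> bool}].
  apply/setP => x; rewrite inE; apply/idP/imsetP.
    move=> /uspan [c ->]; exists [ffun j => c j]; first by rewrite inE.
    by rewrite /phi; apply: eq_bigl => j; rewrite ffunE.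
  move=> [c _ ->]; apply/eqP; rewrite /phi.
  by apply: (big_ind (fun y => inK y)) => [|a b|j _]; [exact: inK0|exact: inKD|exact/eqP/uK].
by rewrite card_imset // cardsT card_ffun card_bool card_ord.
Qed.

Hypothesis k0 : (0 < k)%N.
Variable u : 'I_k -> L.
Hypothesis ub : is_F2_basis u.

Lemma cK : #|Kset| = (2 ^ k)%N. Proof. exact: card_K ub. Qed.

Lemma inK_tr01 e : inK e -> trL k e = 0 \/ trL k e = 1.
Proof. by move=> he; apply: sq01; apply: trL_sq. Qed.

Lemma tr_nonzero : exists e0, inK e0 /\ trL k e0 = 1.
Proof.
case: (boolP [exists e, (e \in Kset) && (trL k e == 1)]).
  by move=> /existsP[e /andP[/inKsetP eK /eqP te]]; exists e.
move=> /existsPn none; exfalso.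
have z e : e \in Kset -> trL k e = 0.
  move=> eK; have := none e; rewrite eK /=; case: (inK_tr01 (e := e)) => //.
    by apply/inKsetP.
  by move=> ->; rewrite eqxx.
pose p : {poly L} := \sum_(i < k) 'X^(2 ^ i).
have pe e : p.[e] = trL k e by rewrite horner_sum; apply: eq_bigr => i _; rewrite hornerXn.
have p0 : p != 0.
  apply/eqP => h; have := congr1 (fun q : {poly L} => q`_1) h.
  rewrite coef0 coef_sum (bigD1 (Ordinal k0)) //= coefXn eqxx big1 ?addr0 ?oner_eq0 //.
    by move/eqP; rewrite oner_eq0.
  move=> i /eqP ni; rewrite coefXn; case: eqP => // h1.
  by exfalso; apply: ni; apply: val_inj => /=; apply/eqP; rewrite -(@eqn_exp2l 2) // -h1.
have sz : (size p <= (2 ^ (k.-1)).+1)%N.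
  apply/leq_sizeP => j hj; rewrite coef_sum big1 // => i _; rewrite coefXn.
  case: eqP => // ej; exfalso; move: hj; rewrite ej ltnNge => /negP; apply.
  by rewrite leq_exp2l // -ltnS prednK.
have hall : all (root p) (enum Kset).
  by apply/allP => e; rewrite mem_enum => eK; rewrite /root pe z.
have := max_poly_roots p0 hall (enum_uniq _).
rewrite -cardE cK => h; have := leq_trans h sz.
rewrite -{1}(prednK k0) expnS ltnS mul2n -addnn.
have : (0 < 2 ^ k.-1)%N by rewrite expn_gt0.
lia.
Qed.


Lemma charsumK c : inK c ->
  \sum_(e in Kset) (-1) ^+ (trb k (e * c)) = (if c == 0%R then #|Kset|%:R else 0%R) :> int.
Proof.
move=> cK; case: eqP => [-> | /eqP c0].
  by under eq_bigr => e _ do rewrite mulr0 trb0 expr0; rewrite sumr_const.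
have [e0 [e0K te0]] := tr_nonzero.
pose e1 := e0 / c.
have e1K : inK e1 by apply: inKM => //; apply: inKV.
have te1 : trb k (e1 * c) by rewrite /e1 mulfVK // /trb te0.
set S := (X in X = _).
have : S = - S.
  rewrite {1}/S (reindex_inj (addIr e1)) /=.
  rewrite (eq_bigl (fun e => e \in Kset)); last first.
    move=> e; apply/inKsetP/inKsetP => h; last exact: inKD.
    by have := inKD h e1K; rewrite -addrA addxx addr0.
  rewrite /S -sumrN; apply: eq_bigr => e /inKsetP eK.
  rewrite mulrDl trbD ?te1; first by rewrite signr_addb expr1 mulrN1.
    exact: inKM.
  exact: inKM.
lia.
Qed.

Lemma collapse (Phi : L -> bool) (c : L -> L) :
  (forall x, inK (c x)) ->
  (forall x e, inK e -> Phi (x + e) = Phi x (+) trb k (e * c x)) ->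
  \sum_(x : L) (-1) ^+ (Phi x) = \sum_(x | c x == 0%R) (-1) ^+ (Phi x) :> int.
Proof.
move=> hcK hP.
have Kn0 : (#|Kset|%:R : int) != 0 by rewrite cK pnatr_eq0 expn_eq0.
apply: (mulfI Kn0).
have E1 : \sum_(e in Kset) \sum_x (-1) ^+ (Phi x) = #|Kset|%:R * \sum_x (-1) ^+ (Phi x) :> int.
  by rewrite sumr_const mulr_natl.
have E2 : forall e, e \in Kset -> \sum_x (-1) ^+ (Phi x) =
    \sum_x (-1) ^+ (Phi x) * (-1) ^+ (trb k (e * c x)) :> int.
  move=> e /inKsetP eK; rewrite (reindex_inj (addIr e)) /=.
  by apply: eq_bigr => x _; rewrite hP // signr_addb.
rewrite -E1 (eq_bigr _ E2) exchange_big /= mulr_sumr [in RHS]big_mkcond.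
apply: eq_bigr => x _; rewrite -mulr_sumr (charsumK (hcK x)).
by case: eqP; rewrite ?mulr0 // mulrC.
Qed.

Lemma coset_sum (Phi : L -> bool) x0 : (forall e, inK e -> Phi (x0 + e) = Phi x0) ->
  \sum_(x | T x == T x0) (-1) ^+ (Phi x) = (-1) ^+ (Phi x0) * #|Kset|%:R :> int.
Proof.
move=> hP; rewrite (reindex_inj (addrI x0)) /=.
rewrite (eq_bigl (fun e => e \in Kset)); last first.
  by move=> e; rewrite TD -{2}[T x0]addr0 (inj_eq (addrI _)) T_eq0 inKset.
rewrite (eq_bigr (fun _ => (-1) ^+ (Phi x0))); last by move=> e /inKsetP eK; rewrite hP.
by rewrite sumr_const mulr_natr.
Qed.

Lemma frob_inj m (a b : L) : a ^+ (2 ^ m) = b ^+ (2 ^ m) -> a = b.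
Proof.
move=> h; have : (a + b) ^+ (2 ^ m) = 0 by rewrite frob2 h addxx.
by move/eqP; rewrite expf_eq0 add_eq0 => /andP[_ /eqP].
Qed.


Lemma geo (x y : L) r : (0 < r)%N ->
  \sum_(1 <= i < 2 ^ r) x ^+ i * y ^+ (2 ^ r - i) = y * (x + y) ^+ (2 ^ r - 1) + y ^+ (2 ^ r).
Proof.
move=> r0.
have N2 : (2 <= 2 ^ r)%N by rewrite -{1}(expn1 2) leq_exp2l.
have S0 : \sum_(0 <= i < 2 ^ r) x ^+ i * y ^+ (2 ^ r - i) = y * (x + y) ^+ (2 ^ r - 1).
  case: (eqVneq x y) => [<- | xy].
    rewrite addxx expr0n.
    have -> : (2 ^ r - 1 == 0)%N = false by apply/negbTE; rewrite subn_eq0 -ltnNge.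
    rewrite mulr0 (eq_big_nat _ _ (F2 := fun _ => x ^+ (2 ^ r))); last first.
      by move=> i /andP[_ hi]; rewrite -exprD subnKC // ltnW.
    rewrite sumr_const_nat subn0; set z := x ^+ _.
    by rewrite -(prednK r0) expnS mulnC mulrnA (mulrn_pchar char2).
  have xy0 : x + y != 0 by rewrite add_eq0.
  apply: (mulIf xy0).
  rewrite -mulrA -exprSr subn1 prednK ?expn_gt0 // frob2 big_distrl /=.
  pose t i := x ^+ i * y ^+ ((2 ^ r).+1 - i).
  transitivity (\sum_(0 <= i < 2 ^ r) (t i.+1 - t i)).
    apply: eq_big_nat => i /andP[_ hi]; rewrite oppE /t mulrDr subSS.
    rewrite subSn ?(ltnW hi) //.
    by congr (_ + _); [rewrite exprSr mulrAC | rewrite exprSr mulrA].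
  rewrite telescope_sumr // /t subn0 subSn // subnn expr0 mul1r expr1 oppE.
  by rewrite exprS mulrDr [x ^+ _ * y]mulrC.
rewrite big_ltn ?expn_gt0 // expr0 mul1r subn0 in S0.
by rewrite -S0 addrC addrA addxx add0r.
Qed.


Lemma e_id (i A R q : nat) : (A * R = q)%N -> (0 < q)%N -> (i < R)%N ->
 (((i * A + 1) * (q - 1) + 1) * R = q * q * i + q * (R - i))%N.
Proof.
case: q => // q1 hA _ hi; rewrite subn1 /=.
have -> : R = (i + (R - i))%N by rewrite subnKC // ltnW.
set j := (R - i)%N; rewrite -/j in hA *.
nia.
Qed.

Lemma G_pow r (x : L) : (0 < r)%N -> (r <= k)%N ->
  (Gfun k r x) ^+ (2 ^ r) = bar x * (T x) ^+ (2 ^ r - 1) + (bar x) ^+ (2 ^ r).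
Proof.
move=> r0 rk; rewrite /Gfun frob_sum /T -geo //.
apply: eq_big_nat => i /andP[i1 hi].
have q : (2 ^ (k - r) * 2 ^ r = 2 ^ k)%N by rewrite -expnD subnK.
rewrite -exprM (e_id q) ?expn_gt0 // exprD -expnD addnn -mul2n exprM xq2.
by rewrite exprM.
Qed.

Lemma barX y m : bar (y ^+ m) = (bar y) ^+ m.
Proof. by rewrite /bar -!exprM mulnC. Qed.

Lemma inKG r (x : L) : (0 < r)%N -> (r <= k)%N -> inK (Gfun k r x).
Proof.
move=> r0 rk; rewrite /inK; apply: (@frob_inj r).
rewrite -!exprM mulnC exprM.
change (bar (Gfun k r x ^+ (2 ^ r)) = Gfun k r x ^+ (2 ^ r)).
have sK : bar (T x) = T x := inKT x.
rewrite G_pow // barD barM barK (barX (T x)) (barX (bar x)) sK barK.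
apply/eqP; rewrite -add_eq0 addrACA -mulrDl -frob2 addrC -/(T x).
by rewrite -exprS subn1 prednK ?expn_gt0 // addxx.
Qed.


Lemma Pclos (w : L) a b : w ^+ (2 ^ a) = w -> w ^+ (2 ^ b) = w -> w ^+ (2 ^ (a + b)) = w.
Proof. by move=> ha hb; rewrite expnD exprM ha hb. Qed.

Lemma Pmul (w : L) a m : w ^+ (2 ^ a) = w -> w ^+ (2 ^ (a * m)) = w.
Proof.
move=> ha; elim: m => [|m IH]; first by rewrite muln0 expr1.
by rewrite mulnS Pclos.
Qed.

Lemma pow_inj r (s t : L) : (0 < r)%N -> coprime r k -> inK s -> inK t ->
  s ^+ (2 ^ r - 1) = t ^+ (2 ^ r - 1) -> s = t.
Proof.
move=> r0 cop sK tK h.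
have d0 : (0 < 2 ^ r - 1)%N.
  by rewrite subn_gt0 -{1}(expn0 2) ltn_exp2l.
case: (eqVneq t 0) => [t0 | t0].
  by move: h; rewrite t0 expr0n gtn_eqF // => /eqP; rewrite expf_eq0 => /andP[_ /eqP].
have s0 : s != 0.
  by apply: contra_neq t0 => s0; move: h; rewrite s0 expr0n gtn_eqF // => /esym/eqP; rewrite expf_eq0 => /andP[_ /eqP].
pose w := s / t.
have wK : inK w by apply: inKM => //; apply: inKV.
have wd : w ^+ (2 ^ r - 1) = 1 by rewrite /w exprMn exprVn h divff // expf_neq0.
have wr : w ^+ (2 ^ r) = w.
  by rewrite -(subnK (expn_gt0 2 r)) addn1 exprS wd mulr1.
have [a _ ha] := Bezoutl r k0.
move: ha; rewrite gcdnC; move: cop; rewrite /coprime => /eqP -> /dvdnP [b hb].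
have w2 : w ^+ 2 = w.
  have := Pmul b wK; rewrite mulnC -hb addnC expnD exprM [(a * r)%N]mulnC.
  by rewrite (Pmul a wr) expn1.
have w0 : w != 0 by rewrite /w mulf_neq0 // invr_eq0.
case: (sq01 w2) => [w00 | w1]; first by move: w0; rewrite w00 eqxx.
by rewrite -(divfK t0 s) -/w w1 mul1r.
Qed.


Lemma trb_pow j z : inK z -> trb k (z ^+ (2 ^ j)) = trb k z.
Proof.
move=> zK; rewrite /trb trLX.
by case: (inK_tr01 zK) => ->; rewrite ?expr0n ?expn_eq0 ?expr1n.
Qed.

Lemma cancel4 (A B E1 E2 : L) : (A + E1) + (B + E2) + (A + B) = E1 + E2.
Proof.
have -> : (A + E1) + (B + E2) + (A + B) = E1 + E2 + ((A + B) + (A + B)) by ring.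
by rewrite addxx addr0.
Qed.

Lemma stepE (y e S : L) N : (y + e) * S + (y + e) ^+ (2 ^ N) + (y * S + y ^+ (2 ^ N)) = e * S + e ^+ (2 ^ N).
Proof. by rewrite frob2 mulrDl cancel4. Qed.

Lemma stepG r (lam x e : L) : (0 < r)%N -> (r <= k)%N -> inK lam -> inK e ->
  trb k (lam * Gfun k r (x + e)) =
  trb k (lam * Gfun k r x) (+) (trb k (e * (lam ^+ (2 ^ r) * T x ^+ (2 ^ r - 1))) (+) trb k (e * lam)).
Proof.
move=> r0 rk lK eK.
have GK y : inK (lam * Gfun k r y) by apply: inKM => //; apply: inKG.
have -> : lam * Gfun k r (x + e) = lam * Gfun k r x + (lam * Gfun k r (x + e) + lam * Gfun k r x).
  by rewrite addrCA addxx addr0.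
rewrite trbD //; last by apply: inKD.
congr (_ (+) _); rewrite -(trb_pow r); last by apply: inKD.
rewrite frob2 !exprMn !G_pow //.
rewrite -mulrDr TK // barD (inK_bar eK).
have h1 : inK (lam ^+ (2 ^ r) * (e * T x ^+ (2 ^ r - 1))).
  by apply: inKM; [apply: inKX | apply: inKM => //; apply: inKX; apply: inKT].
have h2 : inK (lam ^+ (2 ^ r) * e ^+ (2 ^ r)) by apply: inKM; apply: inKX.
move: (T x ^+ _) h1 => S h1; move: (bar x) => y.
rewrite stepE mulrDr (trbD h1 h2).
congr (_ (+) _); first by rewrite mulrCA.
rewrite -exprMn trb_pow; first by rewrite mulrC.
  exact: inKM.
exact: GK.
Qed.
Lemma bent r (g : L -> bool) (lam a : L) :
  (0 < r)%N -> (r <= k)%N -> coprime r k -> inK lam -> lam != 0 ->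
  (forall x e, inK e -> g (x + e) = g x) ->
  (walsh (2 * k) (fun x => trb k (lam * Gfun k r x) (+) g x) a == 0) ||
  (absz (walsh (2 * k) (fun x => trb k (lam * Gfun k r x) (+) g x) a) == (2 ^ k)%N).
Proof.
move=> r0 rk cop lK l0 hg.
set W := walsh _ _ _.
pose mu := lam ^+ (2 ^ r).
pose c x := mu * (T x) ^+ (2 ^ r - 1) + lam + T a.
pose Phi x := (trb k (lam * Gfun k r x) (+) g x) (+) trb (2 * k) (a * x).
have muK : inK mu by apply: inKX.
have hcK x : inK (c x).
  by apply: inKD; [apply: inKD => //; apply: inKM => //; apply: inKX; apply: inKT | apply: inKT].
have hP x e : inK e -> Phi (x + e) = Phi x (+) trb k (e * c x).
  move=> eK.
  have e2 : trb (2 * k) (a * (x + e)) = trb (2 * k) (a * x) (+) trb k (e * T a).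
    rewrite mulrDr trbnD; congr (_ (+) _).
    by rewrite trbn barM (inK_bar eK) -mulrDl mulrC.
  have h1 : inK (e * (mu * T x ^+ (2 ^ r - 1))).
    by apply: inKM => //; apply: inKM => //; apply: inKX; apply: inKT.
  have h2 : inK (e * lam) by apply: inKM.
  have h3 : inK (e * T a) by apply: inKM => //; apply: inKT.
  have ce : trb k (e * c x) = trb k (e * (mu * T x ^+ (2 ^ r - 1))) (+) trb k (e * lam) (+) trb k (e * T a).
    rewrite /c mulrDr mulrDr (trbD _ h3); last exact: inKD.
    by rewrite (trbD h1 h2).
  rewrite /Phi (stepG x r0 rk lK eK) e2 hg // ce -/mu.
  move: (trb k (lam * _)) (trb k (e * (mu * _))) (trb k (e * lam)) (g x) (trb (2 * k) _) (trb k (e * T a)).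
  by do 6 case.
have WE : W = \sum_(x : L) (-1) ^+ (Phi x) by [].
rewrite WE (collapse hcK hP).
case: (pickP (fun x => c x == 0)) => [x0 /eqP cx0 | none]; last first.
  by rewrite big_pred0.
rewrite (eq_bigl (fun x => T x == T x0)); last first.
  move=> x; apply/eqP/eqP => [cx | ex]; last by rewrite /c ex.
  have e : c x = c x0 by rewrite cx cx0.
  apply: (pow_inj r0 cop (inKT x) (inKT x0)); apply: (mulfI (expf_neq0 (2 ^ r) l0)).
  by move: e; rewrite /c /mu => /addIr/addIr.
rewrite coset_sum; last by move=> e eK; rewrite hP // cx0 mulr0 trb0 addbF.
rewrite cK; apply/orP; right.
by case: (Phi x0); rewrite ?expr0 ?expr1 ?mul1r ?mulN1r ?abszN natz.
Qed.


Definition pts (x y e : L) := [:: x + y + e; x + y; x + e; x; y + e; y; e; 0].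
Definition M3 (h : L -> L) x y e := \sum_(p <- pts x y e) h p.
Definition Q2 (g : L -> bool) := forall x y e, M3 (fun z => (g z)%:R) x y e = 0.

Lemma c2r (X W : L) : X = 2 * W -> X = 0.
Proof. by move=> ->; rewrite (pcharf0 char2) mul0r. Qed.

Lemma M3_const c x y e : M3 (fun _ => c) x y e = 0.
Proof.
rewrite /M3 /pts !big_cons big_nil; apply: (@c2r _ (c + c + c + c)); ring.
Qed.

Lemma M3_add (A : L -> L) x y e : (forall a b, A (a + b) = A a + A b) -> M3 A x y e = 0.
Proof.
move=> hA; have A0 : A 0 = 0 by apply: (addIr (A 0)); rewrite -hA addr0 add0r.
rewrite /M3 /pts !big_cons big_nil !hA A0.
by apply: (@c2r _ (A x + A x + A y + A y + A e + A e)); ring.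
Qed.

Lemma M3_bil (A B : L -> L) x y e : (forall a b, A (a + b) = A a + A b) ->
  (forall a b, B (a + b) = B a + B b) -> M3 (fun z => A z * B z) x y e = 0.
Proof.
move=> hA hB; have A0 : A 0 = 0 by apply: (addIr (A 0)); rewrite -hA addr0 add0r.
rewrite /M3 /pts !big_cons big_nil !hA !hB A0 mul0r.
apply: (@c2r _ (2 * (A x * B x) + 2 * (A y * B y) + 2 * (A e * B e) + A x * B y + A y * B x
   + A x * B e + A e * B x + A y * B e + A e * B y)); ring.
Qed.

Lemma M3_mono j x y e : (j < 2 ^ (2 * k))%N -> (wt2 (2 * k) j <= 2)%N ->
  M3 (fun z => z ^+ j) x y e = 0.
Proof.
move=> jn hw; case: (wt_cases jn hw) => [-> | [[i ->] | [i [l ->]]]].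
- rewrite /M3; under eq_bigr => p _ do rewrite expr0.
  exact: (M3_const 1 x y e).
- by apply: M3_add => a b; apply: frob2.
- rewrite /M3; under eq_bigr => p _ do rewrite exprD.
  by apply: (M3_bil (A := fun z => z ^+ (2 ^ i)) (B := fun z => z ^+ (2 ^ l))) => a b; apply: frob2.
Qed.

Lemma degQ2 g : deg_le (2 * k) 2 g -> Q2 g.
Proof.
move=> [a ha] x y e.
transitivity (M3 (fun z => \sum_(j < 2 ^ (2 * k) | (wt2 (2 * k) j <= 2)%N) a j * z ^+ j) x y e).
  by apply: eq_bigr => p _; rewrite ha.
rewrite /M3 exchange_big /= big1 // => j hj.
by rewrite -mulr_sumr; have := M3_mono x y e (ltn_ord j) hj; rewrite /M3 => ->; rewrite mulr0.
Qed.


Lemma natb0 (b : bool) : (b%:R : L) = 0 -> b = false.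
Proof. by case: b => //= /eqP; rewrite oner_eq0. Qed.

Lemma bigxor I (r : seq I) (P : pred I) (F : I -> bool) :
  ((\big[addb/false]_(i <- r | P i) F i)%:R : L) = \sum_(i <- r | P i) (F i)%:R.
Proof. by apply: (big_morph (fun b : bool => (b%:R : L))) => [a b|]; [exact: natbD|]. Qed.

Lemma Q2_fcomp t (f : 'I_t -> L -> bool) v : (forall i, Q2 (f i)) -> Q2 (fcomp f v).
Proof.
move=> hf x y e; rewrite /M3.
under eq_bigr => p _ do rewrite /fcomp bigxor.
rewrite exchange_big /= big1 // => i _.
case: (v i) => /=; first exact: (hf i x y e).
by rewrite big1.
Qed.

Lemma Q2b g : Q2 g -> forall x y e,
  g (x + y + e) (+) g (x + y) (+) g (x + e) (+) g x (+) g (y + e) (+) g y (+) g e (+) g 0 = false.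
Proof.
move=> h x y e; apply: natb0; rewrite !natbD; have := h x y e.
by rewrite /M3 /pts !big_cons big_nil addr0 !addrA.
Qed.

Lemma shift0 (A : pred L) (h : L -> bool) x0 : (forall x, A (x + x0) = A x) ->
  (forall x, A x -> h (x + x0) = ~~ h x) -> \sum_(x | A x) (-1) ^+ (h x) = 0 :> int.
Proof.
move=> hA hh; set S := (X in X = _).
have : S = - S.
  rewrite {1}/S (reindex_inj (addIr x0)) /= (eq_bigl A) // -sumrN.
  by apply: eq_bigr => x Ax; rewrite hh //; case: (h x); rewrite ?expr0 ?expr1 ?opprK.
lia.
Qed.

Section QuadPlat.
Variable g : L -> bool.
Hypothesis hg : Q2 g.

Definition Bf x e := g (x + e) (+) g x (+) g e (+) g 0.

Lemma Badd x y e : Bf (x + y) e = Bf x e (+) Bf y e.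
Proof.
rewrite /Bf; have := Q2b hg x y e.
move: (g (x + y + e)) (g (x + y)) (g (x + e)) (g x) (g (y + e)) (g y) (g e) (g 0).
by do 8 case.
Qed.

Lemma Bsym x e : Bf x e = Bf e x.
Proof. by rewrite /Bf [x + e]addrC; case: (g (e + x)); case: (g e); case: (g x); case: (g 0). Qed.

Definition Vset := [set e | [forall x, ~~ Bf x e]].

Lemma inV e : (e \in Vset) = [forall x, ~~ Bf x e].
Proof. by rewrite inE. Qed.

Lemma V0 : 0 \in Vset.
Proof. by rewrite inV; apply/forallP => x; rewrite /Bf addr0; case: (g x); case: (g 0). Qed.

Lemma VD e e' : e \in Vset -> e' \in Vset -> e + e' \in Vset.
Proof.
rewrite !inV => /forallP h /forallP h'; apply/forallP => x.
by rewrite Bsym Badd -!(Bsym x); move: (h x) (h' x); case: (Bf x e); case: (Bf x e').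
Qed.

Lemma sumB e : \sum_(x : L) (-1) ^+ (Bf x e) = (if e \in Vset then #|L|%:R else 0) :> int.
Proof.
case: ifP => [| /negbT]; rewrite inV.
  move=> /forallP h; rewrite (eq_bigr (fun _ => 1)); first by rewrite sumr_const.
  by move=> x _; move: (h x); case: (Bf x e).
rewrite negb_forall => /existsP [x0]; rewrite negbK => hx0.
apply: (shift0 (x0 := x0)) => // x _.
by rewrite Badd hx0; case: (Bf x e).
Qed.

Definition ell a e := g e (+) g 0 (+) trb (2 * k) (a * e).

Lemma ellD a e e' : e' \in Vset -> ell a (e + e') = ell a e (+) ell a e'.
Proof.
rewrite inV => /forallP h; move: (h e); rewrite /ell /Bf mulrDr trbnD.
move: (g (e + e')) (g e) (g e') (g 0) (trb _ (a * e)) (trb _ (a * e')).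
by do 6 case.
Qed.

Lemma sumEll a : \sum_(e in Vset) (-1) ^+ (ell a e) =
  (if [forall e in Vset, ~~ ell a e] then #|Vset|%:R else 0) :> int.
Proof.
case: ifP => [/forall_inP h | /negbT].
  rewrite (eq_bigr (fun _ => 1)); first by rewrite sumr_const.
  by move=> x xV; move: (h x xV); case: (ell a x).
rewrite negb_forall_in => /exists_inP [x0 x0V]; rewrite negbK => hx0.
apply: (shift0 (x0 := x0)).
  move=> x; apply/idP/idP => h; last exact: VD.
  by have := VD h x0V; rewrite -addrA addxx addr0.
by move=> x xV; rewrite ellD // hx0 addbT.
Qed.

Lemma Wsq a : walsh (2 * k) g a * walsh (2 * k) g a =
  #|L|%:R * \sum_(e in Vset) (-1) ^+ (ell a e).
Proof.
rewrite /walsh mulr_suml.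
transitivity (\sum_(e : L) (-1) ^+ (ell a e) * \sum_(x : L) (-1) ^+ (Bf x e) : int).
  rewrite (eq_bigr (fun x => \sum_(e : L) (-1) ^+ (ell a e) * (-1) ^+ (Bf x e))); last first.
    move=> x _; rewrite mulr_sumr (reindex_inj (addrI x)) /=; apply: eq_bigr => e _.
    rewrite -!signr_addb /ell /Bf mulrDr trbnD; congr (_ ^+ _).
    move: (g x) (g (x + e)) (g e) (g 0) (trb _ (a * x)) (trb _ (a * e)).
    by do 6 case.
  by rewrite exchange_big /=; apply: eq_bigr => e _; rewrite mulr_sumr.
under eq_bigr => e _ do rewrite sumB.
rewrite mulr_sumr [RHS]big_mkcond /=; apply: eq_bigr => e _.
by case: (e \in Vset); rewrite ?mulr0 // mulrC.
Qed.

Lemma Vgroup : group_set Vset.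
Proof. by apply/group_setP; split; [exact: V0 | move=> x y hx hy; exact: VD]. Qed.

Lemma cardV : exists2 m, (m <= 2 * k)%N & #|Vset| = (2 ^ m)%N.
Proof.
have := cardSg (G := [set: L]%G) (H := Group Vgroup) (subsetT _).
rewrite cardsT hL => /(dvdn_pfactor _ _ (isT : prime 2)) [m mle ->].
by exists m.
Qed.

Lemma quad_plat : plateaued (2 * k) g.
Proof.
have [m mle cV] := cardV.
exists ((2 * k + m) %/ 2)%N; split; [lia | lia | move=> a].
have := Wsq a; rewrite sumEll; case: ifP => _; last first.
  by rewrite mulr0 => /eqP; rewrite mulf_eq0 orbb => ->.
rewrite cV hL; set W := walsh _ _ _ => hW; apply/orP; right.
have hw : (absz W * absz W = 2 ^ (2 * k + m))%N.
  by rewrite -abszM hW -natrM -expnD natz.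
have : (absz W %| 2 ^ (2 * k + m))%N by rewrite -hw dvdn_mulr.
case/(dvdn_pfactor _ _ (isT : prime 2)) => s' _ ew.
move: hw; rewrite ew -expnD => /eqP; rewrite eqn_exp2l // => /eqP e.
by apply/eqP; congr (2 ^ _)%N; lia.
Qed.

End QuadPlat.

Lemma T_surj s : inK s -> exists x, T x = s.
Proof.
move=> sK; case: (pickP (fun x => T x == s)) => [x /eqP <- | none]; first by exists x.
exfalso.
have fib s' : (\sum_(x | T x == s') 1 <= #|Kset|)%N.
  case: (pickP (fun x => T x == s')) => [x0 /eqP h0 | none']; last by rewrite big_pred0.
  rewrite sum1_card -(card_imset _ (addIr x0)); apply: subset_leq_card.
  apply/subsetP => y /imsetP [x]; rewrite inE => /eqP hx ->.
  by rewrite /in_sub -T_eq0 TD hx h0 addxx.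
have cL : #|L| = (\sum_(s' in Kset) \sum_(x | T x == s') 1)%N.
  rewrite -sum1_card (partition_big (fun x => T x) (mem Kset)) //.
  by move=> x _; apply/inKsetP; apply: inKT.
have sKs : s \in Kset by apply/inKsetP.
move: cL; rewrite (bigD1 s) //= big_pred0 // add0n => cL.
have h1 : (#|L| <= \sum_(s' | (s' \in Kset) && (s' != s)) #|Kset|)%N.
  by rewrite cL; apply: leq_sum => s' _; exact: fib.
rewrite sum_nat_const in h1.
have h2 : #|[pred s' | (s' \in Kset) && (s' != s)]| = (#|Kset| - 1)%N.
  rewrite (cardD1 s Kset) sKs add1n subSS subn0; apply: eq_card => s'.
  by rewrite !inE andbC.
rewrite h2 cK hL mul2n -addnn expnD in h1.
have : (0 < 2 ^ k)%N by rewrite expn_gt0.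
move: h1; move: (2 ^ k)%N => K; nia.
Qed.

Lemma T0 : T 0 = 0.
Proof. by rewrite /T /bar expr0n expn_eq0 addr0. Qed.

Lemma nonquad r (g : L -> bool) : (1 < r)%N -> (r < k)%N ->
  (forall x e, inK e -> g (x + e) = g x (+) (trb k (e * T x ^+ (2 ^ r - 1)) (+) trb k e)) ->
  ~ Q2 g.
Proof.
move=> r1 rk hD hq.
set d := (2 ^ r - 1)%N.
have dS : d.+1 = (2 ^ r)%N by rewrite /d subn1 prednK // expn_gt0.
have d3 : (2 < d)%N.
  have : (2 ^ 2 <= 2 ^ r)%N by rewrite leq_exp2l.
  by rewrite -dS.
have add s t : inK s -> inK t -> (s + t) ^+ d = s ^+ d + t ^+ d.
  move=> sK tK; have [x hx] := T_surj sK; have [y hy] := T_surj tK.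
  set c0 := (s + t) ^+ d + s ^+ d + t ^+ d.
  have c0K : inK c0.
    by apply: inKD; [apply: inKD; apply: inKX => //; apply: inKD | apply: inKX].
  have tz e : inK e -> trb k (e * c0) = false.
    move=> eK; have := Q2b hq x y e.
    have ge : g e = g 0 (+) (trb k (e * T 0 ^+ d) (+) trb k e) by rewrite -{1}(add0r e) hD.
    rewrite (hD (x + y) e eK) (hD x e eK) (hD y e eK) ge TD T0 expr0n gtn_eqF ?(ltn_trans _ d3) //.
    rewrite mulr0 trb0 hx hy /c0 !mulrDr.
    have h1 : inK (e * (s + t) ^+ d) by apply: inKM => //; apply: inKX; apply: inKD.
    have h2 : inK (e * s ^+ d) by apply: inKM => //; apply: inKX.
    have h3 : inK (e * t ^+ d) by apply: inKM => //; apply: inKX.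
    rewrite (trbD _ h3); last exact: inKD.
    rewrite (trbD h1 h2).
    move: (g (x + y)) (g x) (g y) (g 0) (trb k (e * (s + t) ^+ d)) (trb k (e * s ^+ d)) (trb k (e * t ^+ d)) (trb k e).
    by do 8 case.
  have : c0 = 0.
    apply/eqP; apply: contraT => c00.
    have [e0 [e0K te0]] := tr_nonzero.
    have := tz (e0 / c0) (inKM e0K (inKV c0K)).
    by rewrite mulfVK // /trb te0 eqxx.
  by rewrite /c0 -addrA => /eqP; rewrite add_eq0 => /eqP.
have hfix s : inK s -> s ^+ d = s.
  move=> sK; have := add s 1 sK inK1; rewrite expr1n => h.
  have := frob2 r s 1; rewrite expr1n -dS !exprSr h => e.
  apply/eqP; rewrite -add_eq0; apply/eqP.
  have -> : s ^+ d + s = (s ^+ d + 1) * (s + 1) - (s ^+ d * s + 1) by ring.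
  by rewrite e subrr.
pose p : {poly L} := 'X^d - 'X.
have sp : size p = d.+1.
  by rewrite /p size_addl ?size_polyXn // size_opp size_polyX ltnS ltnW.
have p0 : p != 0 by rewrite -size_poly_gt0 sp.
have hall : all (root p) (enum Kset).
  apply/allP => s; rewrite mem_enum => /inKsetP sK.
  by rewrite /root /p !hornerE hfix // subrr.
have := max_poly_roots p0 hall (enum_uniq _).
rewrite -cardE cK sp dS ltn_exp2l // => /(ltn_trans rk).
by rewrite ltnn.
Qed.

Lemma plat_ext n (g1 g2 : L -> bool) : g1 =1 g2 -> plateaued n g1 -> plateaued n g2.
Proof.
move=> e [s [h1 h2 h3]]; exists s; split => // a.
have -> : walsh n g2 a = walsh n g1 a by apply: eq_bigr => x _; rewrite e.
exact: h3.
Qed.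

Lemma ffun_inv P x e : inK e -> ffun_of (2 * k) u P (x + e) = ffun_of (2 * k) u P x.
Proof.
move=> eK; rewrite /ffun_of /rp_eval; apply: eq_bigr => S _; apply: eq_forallb => j.
have uK : inK (u j) by case: ub => uK _ _; apply/eqP; exact: uK.
have z : trb (2 * k) (u j * e) = false by rewrite trbn (inK_bar (inKM uK eK)) addxx trb0.
by rewrite mulrDr trbnD z addbF.
Qed.

Lemma fcomp_inv t (F : 'I_t -> reduced_poly k) v x e : inK e ->
  fcomp (fun i => ffun_of (2 * k) u (F i)) v (x + e) = fcomp (fun i => ffun_of (2 * k) u (F i)) v x.
Proof. by move=> eK; rewrite /fcomp; apply: eq_bigr => i _; rewrite ffun_inv. Qed.

Lemma main_aux r t (F : 'I_t -> reduced_poly k) :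
  (1 < r)%N -> (r < k)%N -> coprime r k ->
  let n := (2 * k)%N in
  let f := fun i => ffun_of n u (F i) in
  (H_vplateaued n k r f <-> f_vplateaued n f) /\
  ((2 < k)%N -> (forall i, deg_le n 2 (f i)) ->
     H_vplateaued n k r f /\ ~ H_quadratic n k r f).
Proof.
move=> r1 rk cop n f.
have r0 : (0 < r)%N by apply: ltnW.
have rk' : (r <= k)%N by apply: ltnW.
have H0 v : Hcomp k r f 0 v =1 fcomp f v.
  by move=> x; rewrite /Hcomp mul0r trb0.
have back : f_vplateaued n f -> H_vplateaued n k r f.
  move=> hf lam v /eqP lK hv.
  case: (eqVneq lam 0) => [l0 | l0].
    subst lam; case: hv => [| hv]; first by rewrite eqxx.
    by apply: (plat_ext (g1 := fcomp f v)) => [x|]; [rewrite H0 | apply: hf].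
  exists k; split => //; first by rewrite leq_pmull.
  move=> a; apply: (bent a r0 rk' cop lK l0) => x e eK.
  exact: fcomp_inv.
split.
  split => //.
  move=> hH v hv; apply: (plat_ext (g1 := Hcomp k r f 0 v)) => [x|]; first by rewrite H0.
  by apply: hH => //; [rewrite /in_sub expr0n expn_eq0 | right].
move=> k2 hq; split.
  apply: back => v _; apply: quad_plat; apply: Q2_fcomp => i; exact: degQ2.
move=> hQ.
have := hQ 1 (fun _ => false) (introT eqP inK1) (or_introl (oner_neq0 _)).
move/degQ2; apply: (nonquad r1 rk) => x e eK.
rewrite /Hcomp (stepG x r0 rk' inK1 eK) expr1n !mul1r mulr1 fcomp_inv //.
move: (trb k (Gfun k r x)) (trb k (e * _)) (trb k e) (fcomp f _ x).
by do 4 case.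
Qed.

End Basics.

Theorem corollary7 (L : finFieldType) (k r t : nat)
  (u : 'I_k -> L) (F : 'I_t -> reduced_poly k) :
  #|L| = (2 ^ (2 * k))%N ->
  (1 < r)%N -> (r < k)%N -> coprime r k ->
  is_F2_basis u ->
  (0 < t)%N ->
  let n := (2 * k)%N in
  let f := fun i => ffun_of n u (F i) in
  (H_vplateaued n k r f <-> f_vplateaued n f) /\
  ((2 < k)%N -> (forall i, deg_le n 2 (f i)) ->
     H_vplateaued n k r f /\ ~ H_quadratic n k r f).
Proof.
move=> hL r1 rk cop ub t0.
have k0 : (0 < k)%N by apply: (leq_ltn_trans (leq0n r) rk).
exact: (main_aux hL k0 ub F r1 rk cop).
Qed.
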